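(* Let $n\ge 2$, $N=\binom n2$, and let $w=w_1\cdots w_N$ be a word in the alphabet $[n-1]$. Then $w_1w_2\cdots w_N$ is a 132-avoiding sorting network of $\mathfrak S_n$ if and only if the reversed word $w_Nw_{N-1}\cdots w_1$ is a 132-avoiding sorting network of $\mathfrak S_n$.
   Context: For $i\in[n-1]$ let $s_i=(i,i+1)\in\mathfrak S_n$ be the adjacent transposition, and let $w_0\in\mathfrak S_n$ be the reverse permutation $w_0(i)=n+1-i$. A sorting network (of $\mathfrak S_n$) is a word $w=w_1\cdots w_N$, $N=\binom n2$, in the alphabet $[n-1]$ with $s_{w_1}s_{w_2}\cdots s_{w_N}=w_0$ (necessarily a reduced word). Intermediate permutations are $\sigma_0=\mathrm{id}$ and $\sigma_k=s_{w_1}\cdots s_{w_k}$, where the product is formed from the left so that, in one-line notation, $\sigma_k$ is obtained from $\sigma_{k-1}$ by swapping the entries in positions $w_k$ and $w_k+1$. A sorting network is 132-avoiding if every $\sigma_k$, $k\in[N]$, avoids the pattern 132 (in one-line notation). *)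

(* Defs.v *)
(* Permutations of [n] are represented in one-line notation
   as sequences of naturals (values 1..n); positions are 1-based in the
   mathematical text and 0-based in [nth]. *)
From mathcomp Require Import all_boot.
Set Implicit Arguments. Unset Strict Implicit. Unset Printing Implicit Defensive.

(* Swap the entries in (1-based) positions i and i+1 of the one-line word s. *)
Definition swap_pos (s : seq nat) (i : nat) : seq nat :=
  [seq nth 0 s (if j == i.-1 then i else if j == i then i.-1 else j)
  | j <- iota 0 (size s)].

Definition id_perm (n : nat) : seq nat := iota 1 n.

Definition w0_perm (n : nat) : seq nat := rev (iota 1 n).

(* sigma_k = s_{w_1} ... s_{w_k}, obtained from the identity by successive
   position swaps *)
Definition inter_perm (n : nat) (w : seq nat) (k : nat) : seq nat :=
  foldl swap_pos (id_perm n) (take k w).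

Definition avoids132 (s : seq nat) : bool :=
  [forall i : 'I_(size s), forall j : 'I_(size s), forall k : 'I_(size s),
     ((i < j) && (j < k)) ==>
     ~~ ((nth 0 s i < nth 0 s k) && (nth 0 s k < nth 0 s j))].

Definition sorting_network (n : nat) (w : seq nat) : Prop :=
  [/\ size w = 'C(n, 2), all (fun a => 0 < a < n) w &
      inter_perm n w (size w) = w0_perm n].

Definition avoiding132_sorting_network (n : nat) (w : seq nat) : Prop :=
  sorting_network n w /\
  forall k, 1 <= k <= size w -> avoids132 (inter_perm n w k).

(* Main.v *)
Require Import Defs.
From mathcomp Require Import all_boot zify.
Set Implicit Arguments. Unset Strict Implicit. Unset Printing Implicit Defensive.

Definition tn (i j : nat) := if j == i.-1 then i else if j == i then i.-1 else j.

Lemma size_swap s i : size (swap_pos s i) = size s.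
Proof. by rewrite /swap_pos size_map size_iota. Qed.

Lemma nth_swap s i j : j < size s -> nth 0 (swap_pos s i) j = nth 0 s (tn i j).
Proof. by move=> hj; rewrite /swap_pos (nth_map 0) ?size_iota // nth_iota. Qed.

Lemma tn_lt i j m : 0 < i < m -> j < m -> tn i j < m.
Proof. rewrite /tn; (repeat case: ifP => /eqP ?); lia. Qed.

Lemma tn_inv i j : 0 < i -> tn i (tn i j) = j.
Proof.
move=> hi; have e : (i == i.-1) = false by apply/eqP; lia.
have [->|h1] := eqVneq j i.-1.
  by rewrite /tn eqxx e eqxx.
have [->|h2] := eqVneq j i.
  by rewrite /tn e eqxx eqxx.
by rewrite /tn (negPf h1) (negPf h2) (negPf h1) (negPf h2).
Qed.

Lemma swap_swap s i : 0 < i < size s -> swap_pos (swap_pos s i) i = s.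
Proof.
move=> hi; apply: (@eq_from_nth _ 0); rewrite ?size_swap // => j hj.
by rewrite nth_swap ?size_swap ?tn_lt // nth_swap ?tn_lt // tn_inv //; case/andP: hi.
Qed.

Lemma swap_map f s i : 0 < i < size s -> swap_pos (map f s) i = map f (swap_pos s i).
Proof.
move=> hi; apply: (@eq_from_nth _ 0).
  by rewrite size_swap (size_map f (swap_pos s i)) size_swap size_map.
rewrite size_swap (size_map f s) => j hj.
rewrite nth_swap ?size_map // (nth_map 0) ?tn_lt // (nth_map 0) ?size_swap //.
by rewrite nth_swap.
Qed.

Definition ok m (u : seq nat) := all (fun a => 0 < a < m) u.

Lemma fswap_size s u : size (foldl swap_pos s u) = size s.
Proof. by elim: u s => //= a u IH s; rewrite IH size_swap. Qed.

Lemma fswap_map f s u : ok (size s) u ->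
  foldl swap_pos (map f s) u = map f (foldl swap_pos s u).
Proof.
elim: u s => //= a u IH s /andP[ha hu].
by rewrite swap_map // IH // size_swap.
Qed.

Lemma fswap_rev s u : ok (size s) u -> foldl swap_pos (foldl swap_pos s u) (rev u) = s.
Proof.
elim/last_ind: u => //= u x IH.
rewrite /ok all_rcons => /andP[hx hu].
by rewrite foldl_rcons rev_rcons /= swap_swap ?fswap_size // IH.
Qed.

Lemma fswap_bound n s u : (forall j, j < size s -> nth 0 s j <= n) -> ok (size s) u ->
  forall j, j < size s -> nth 0 (foldl swap_pos s u) j <= n.
Proof.
elim: u s => //= a u IH s hs /andP[ha hu].
move=> j hj; apply: IH; rewrite ?size_swap // => k hk.
by rewrite nth_swap // hs // tn_lt.
Qed.

Definition ninv (s : seq nat) : nat :=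
  \sum_(p < size s) \sum_(q < size s) ((p < q) && (nth 0 s q < nth 0 s p)).

Lemma tn_mono i p q : 0 < i -> (tn i p < tn i q) -> (p < q) || ((p == i) && (q == i.-1)).
Proof. rewrite /tn; (repeat case: ifP => /eqP ?); lia. Qed.

Lemma sum_single m (i j : nat) (F : nat -> nat -> nat) : i < m -> j < m ->
  \sum_(p < m) \sum_(q < m) ((val p == i) && (val q == j)) * F p q = F i j.
Proof.
move=> hi hj; rewrite (bigD1 (Ordinal hi)) //= [X in _ + X]big1 ?addn0; last first.
  move=> p hp; apply: big1 => q _.
  have -> : (val p == i) = false.
    by apply/eqP => h; move/eqP: hp; apply; apply: val_inj.
  by [].
rewrite (bigD1 (Ordinal hj)) //= [X in _ + X]big1 ?addn0 ?eqxx ?mul1n //.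
move=> q hq; have -> : (val q == j) = false.
  by apply/eqP => h; move/eqP: hq; apply; apply: val_inj.
by rewrite andbF.
Qed.

Lemma inv_swap s i : 0 < i < size s ->
  ninv (swap_pos s i) <= ninv s + (nth 0 s i.-1 < nth 0 s i).
Proof.
move=> hi; rewrite /ninv size_swap; set m := size s.
have hT : forall p : 'I_m, tn i p < m by move=> p; apply: tn_lt.
pose T (p : 'I_m) : 'I_m := Ordinal (hT p).
have i0 : 0 < i by case/andP: hi.
have Tinj : injective T.
  move=> p q /(congr1 val) /= h; apply: ord_inj.
  by rewrite -(tn_inv p i0) -(tn_inv q i0) h.
under eq_bigr => p _ do under eq_bigr => q _ do rewrite !nth_swap //.
rewrite (reindex_inj Tinj) /=.
under eq_bigr => p _ do rewrite (reindex_inj Tinj) /=.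
under eq_bigr => p _ do under eq_bigr => q _ do rewrite !tn_inv //.
have hi1 : i.-1 < m by lia.
have hi2 : i < m by lia.
rewrite -(sum_single (fun p q => nth 0 s q < nth 0 s p) hi2 hi1).
rewrite -big_split /=; apply: leq_sum => p _.
rewrite -big_split /=; apply: leq_sum => q _.
case: (nth 0 s q < nth 0 s p); rewrite ?andbF ?andbT ?muln1 //.
case h: (tn i p < tn i q) => //.
by move: (tn_mono i0 h); case: (p < q) => //= ->.
Qed.

Lemma sum_lt n : \sum_(p < n) \sum_(q < n) (p < q) = 'C(n,2).
Proof.
elim: n => [|n IH]; first by rewrite big_ord0.
rewrite big_ord_recr /= [X in _ + X]big1 ?addn0; last first.
  by move=> q _; have := ltn_ord q; rewrite ltnS leqNgt => /negPf ->.
under eq_bigr => p _ do rewrite big_ord_recr /= ltn_ord.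
rewrite big_split /= IH sum1_card card_ord binS bin1 //.
Qed.

Lemma nth_id n p : p < n -> nth 0 (id_perm n) p = p.+1.
Proof. by move=> h; rewrite /id_perm nth_iota. Qed.

Lemma nth_w0 n p : p < n -> nth 0 (w0_perm n) p = n - p.
Proof.
move=> h; rewrite /w0_perm nth_rev size_iota // nth_iota; lia.
Qed.

Lemma inv_id n : ninv (id_perm n) = 0.
Proof.
rewrite /ninv big1 // => p _; rewrite big1 // => q _.
rewrite /id_perm size_iota in p q *.
rewrite !nth_id //; lia.
Qed.

Lemma inv_w0 n : ninv (w0_perm n) = 'C(n,2).
Proof.
rewrite /ninv -sum_lt /w0_perm size_rev size_iota; apply: eq_bigr => p _.
apply: eq_bigr => q _; rewrite -/(w0_perm n) !nth_w0 //.
have := ltn_ord q; have := ltn_ord p; case h: (p < q) => /=; lia.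
Qed.

Definition cmpv n (v : nat) := n.+1 - v.

Lemma cmpv_id n : map (cmpv n) (id_perm n) = w0_perm n.
Proof.
apply: (@eq_from_nth _ 0); first by rewrite size_map /id_perm /w0_perm size_rev.
rewrite size_map /id_perm size_iota => p hp.
rewrite (nth_map 0) ?size_iota // -/(id_perm n) nth_id // nth_w0 // /cmpv; lia.
Qed.

Lemma cmpv_w0 n : map (cmpv n) (w0_perm n) = id_perm n.
Proof.
apply: (@eq_from_nth _ 0); first by rewrite size_map /id_perm /w0_perm size_rev.
rewrite size_map /w0_perm size_rev size_iota => p hp.
rewrite (nth_map 0) ?size_rev ?size_iota // -/(w0_perm n) nth_id // nth_w0 // /cmpv; lia.
Qed.

Definition has132 (s : seq nat) := exists p1 p2 p3,
  [/\ p1 < p2, p2 < p3, p3 < size s & (nth 0 s p1 < nth 0 s p3 < nth 0 s p2)].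
Definition has312 (s : seq nat) := exists p1 p2 p3,
  [/\ p1 < p2, p2 < p3, p3 < size s & (nth 0 s p2 < nth 0 s p3 < nth 0 s p1)].

Lemma avoidsP s : avoids132 s <-> ~ has132 s.
Proof.
split.
- move=> /forallP H [p1 [p2 [p3 [h12 h23 h3 hv]]]].
  have h1 : p1 < size s by lia.
  have h2 : p2 < size s by lia.
  move: (H (Ordinal h1)) => /forallP /(_ (Ordinal h2)) /forallP /(_ (Ordinal h3)) /implyP /=.
  by move=> /(_ (introT andP (conj h12 h23))); rewrite hv.
- move=> H; apply/forallP => i; apply/forallP => j; apply/forallP => k.
  apply/implyP => /andP[hij hjk]; apply/negP => hv; apply: H.
  by exists i, j, k; split.
Qed.

Lemma id_no132 n : ~ has132 (id_perm n).
Proof.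
move=> [p1 [p2 [p3 [h12 h23 h3 hv]]]]; move: hv.
rewrite /id_perm size_iota in h3; rewrite !nth_id //; lia.
Qed.

Lemma id_no312 n : ~ has312 (id_perm n).
Proof.
move=> [p1 [p2 [p3 [h12 h23 h3 hv]]]]; move: hv.
rewrite /id_perm size_iota in h3; rewrite !nth_id //; lia.
Qed.

Lemma tn_mono2 i p q : 0 < i -> p < q -> ~~ ((p == i.-1) && (q == i)) -> tn i p < tn i q.
Proof. rewrite /tn; (repeat case: ifP => /eqP ?); rewrite /= ?andbT ?andbF; lia. Qed.

Lemma tnE1 i : 0 < i -> tn i i.-1 = i.
Proof. by rewrite /tn eqxx. Qed.
Lemma tnE2 i : 0 < i -> tn i i = i.-1.
Proof. by move=> h; rewrite /tn eqxx ifN_eq //; apply/eqP; lia. Qed.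
Lemma tnE3 i p : p != i.-1 -> p != i -> tn i p = p.
Proof. by move=> h1 h2; rewrite /tn (negPf h1) (negPf h2). Qed.

Section Net.
Variables (n : nat) (w : seq nat).
Hypothesis okw : ok n w.

Lemma size_inter k : size (inter_perm n w k) = n.
Proof. by rewrite /inter_perm fswap_size /id_perm size_iota. Qed.

Lemma inter_step k : k < size w ->
  inter_perm n w k.+1 = swap_pos (inter_perm n w k) (nth 0 w k).
Proof. by move=> h; rewrite /inter_perm (take_nth 0 h) foldl_rcons. Qed.

Lemma letter k : k < size w -> 0 < nth 0 w k < n.
Proof. by move=> h; move/allP: okw; apply; apply: mem_nth. Qed.

Lemma ok_take k : ok n (take k w).
Proof. by apply/allP => x /mem_take hx; move/allP: okw; apply. Qed.

Lemma inter_bound k j : j < n -> nth 0 (inter_perm n w k) j <= n.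
Proof.
move=> hj; apply: fswap_bound; rewrite /id_perm ?size_iota //.
- by move=> p hp; rewrite -/(id_perm n) nth_id.
- exact: ok_take.
Qed.

Definition asc k := nth 0 (inter_perm n w k) (nth 0 w k).-1 < nth 0 (inter_perm n w k) (nth 0 w k).

Lemma inter0 : inter_perm n w 0 = id_perm n.
Proof. by rewrite /inter_perm take0. Qed.

Lemma ninv_bound k : k <= size w -> ninv (inter_perm n w k) + \sum_(j < k) ~~ asc j <= k.
Proof.
elim: k => [|k IH] hk; first by rewrite inter0 inv_id big_ord0.
rewrite big_ord_recr /= inter_step //.
have hs := inv_swap (s := inter_perm n w k) (i := nth 0 w k).
rewrite size_inter in hs; have := hs (letter hk) => {hs}.
have := IH (ltnW hk); rewrite /asc.
case: (nth 0 (inter_perm n w k) (nth 0 w k).-1 < nth 0 (inter_perm n w k) (nth 0 w k)) => /=; lia.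
Qed.

Hypothesis net : sorting_network n w.

Lemma ascent k : k < size w -> asc k.
Proof.
move=> hk; case: net => hs _ hf.
have := ninv_bound (leqnn (size w)); rewrite hf inv_w0 -hs.
rewrite (bigD1 (Ordinal hk)) //=; case: (asc k) => //=; lia.
Qed.

Lemma L312 j : j <= size w -> has312 (inter_perm n w j) ->
  exists m, 0 < m <= j /\ has132 (inter_perm n w m).
Proof.
elim: j => [|j IH] hj; first by rewrite inter0 => /id_no312.
move=> [p1 [p2 [p3 [h12 h23 h3 hv]]]].
have [i0 iN] := andP (letter hj).
set i := nth 0 w j in i0 iN.
rewrite size_inter in h3.
have hsz : size (inter_perm n w j) = n by rewrite size_inter.
move: hv; rewrite inter_step // !nth_swap ?size_inter; try lia.
rewrite -/i => hv.
have [/andP[/eqP e1 /eqP e2]|ne1] := boolP ((p1 == i.-1) && (p2 == i)).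
  subst p1 p2; rewrite tnE1 // tnE2 // tnE3 in hv; try (apply/eqP; lia).
  have [j0|jpos] := posnP j.
    exfalso; apply: (@id_no132 n); rewrite -inter0 -j0.
    exists i.-1, i, p3; split; rewrite ?size_inter; try lia; by [].
  exists j; split; first lia; exists i.-1, i, p3; split; rewrite ?size_inter; try lia; by [].
have [/andP[/eqP e1 /eqP e2]|ne2] := boolP ((p2 == i.-1) && (p3 == i)).
  subst p2 p3; rewrite tnE1 // tnE2 // in hv.
  have := ascent hj; rewrite /asc -/i; lia.
have [m [hm1 hm2]] : exists m, 0 < m <= j /\ has132 (inter_perm n w m).
  apply: IH; first lia.
  exists (tn i p1), (tn i p2), (tn i p3); split; rewrite ?size_inter //.
  - exact: (tn_mono2 i0 h12 ne1).
  - exact: (tn_mono2 i0 h23 ne2).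
  - by apply: tn_lt; rewrite ?i0 ?iN.
by exists m; split => //; lia.
Qed.

End Net.

Section Net2.
Variables (n : nat) (w : seq nat).
Hypothesis okw : ok n w.
Hypothesis net : sorting_network n w.

Lemma full k : foldl swap_pos (inter_perm n w k) (drop k w) = w0_perm n.
Proof.
case: net => _ _; rewrite /inter_perm take_size => <-.
by rewrite -foldl_cat cat_take_drop.
Qed.

Lemma ok_rev : ok n (rev w).
Proof. by rewrite /ok all_rev. Qed.

Lemma compl k : k <= size w ->
  inter_perm n w (size w - k) = map (cmpv n) (inter_perm n (rev w) k).
Proof.
move=> hk; set s := inter_perm n w (size w - k).
have hok : ok (size s) (drop (size w - k) w).
  by rewrite size_inter; apply/allP => x /mem_drop hx; move/allP: okw; apply.
rewrite -[s](fswap_rev hok) full -cmpv_id fswap_map; last first.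
  by rewrite /id_perm size_iota; apply/allP => x; rewrite mem_rev => /mem_drop hx; move/allP: okw; apply.
by rewrite /inter_perm take_rev.
Qed.

Lemma rev_final : inter_perm n (rev w) (size (rev w)) = w0_perm n.
Proof.
have hok : ok (size (id_perm n)) w by rewrite /id_perm size_iota.
rewrite /inter_perm take_size -cmpv_w0 fswap_map; last first.
  by rewrite /w0_perm size_rev size_iota ok_rev.
have hf : foldl swap_pos (id_perm n) w = w0_perm n.
  by case: net => _ _; rewrite /inter_perm take_size.
by rewrite -{1}hf fswap_rev // cmpv_id.
Qed.

End Net2.

Lemma fwd n w : avoiding132_sorting_network n w -> avoiding132_sorting_network n (rev w).
Proof.
case=> net H; have okw : ok n w by case: net.
split.
  split; [by rewrite size_rev; case: net | exact: ok_rev | exact: rev_final].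
move=> k /andP[k1 k2]; rewrite size_rev in k2.
apply/avoidsP => [[p1 [p2 [p3 [h12 h23 h3 hv]]]]].
have okr := ok_rev okw.
rewrite size_inter in h3.
have h312 : has312 (inter_perm n w (size w - k)).
  rewrite compl //; exists p1, p2, p3; split; rewrite ?size_map ?size_inter //.
  have b1 := inter_bound okr k (ltn_trans h12 (ltn_trans h23 h3)).
  have b2 := inter_bound okr k (ltn_trans h23 h3).
  have b3 := inter_bound okr k h3.
  rewrite !(nth_map 0) ?size_inter /cmpv; try lia.
have [m [hm hm2]] := L312 okw net (leq_subr _ _) h312.
have := H m ltac:(lia); move/avoidsP; apply; exact: hm2.
Qed.

Theorem mainTheorem1 (n : nat) (w : seq nat) :
  2 <= n -> size w = 'C(n, 2) -> all (fun a => 0 < a < n) w ->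
  (avoiding132_sorting_network n w <-> avoiding132_sorting_network n (rev w)).
Proof.
move=> _ _ _; split; first exact: fwd.
by move/fwd; rewrite revK.
Qed.
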